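(* Let $S$ be a finite $p$-group, let $\mathbb{W}(S)$ be the set of elementary abelian normal subgroups $A$ of $S$ such that for every $s\in S$, $[A,s,s]=\{1\}$ implies $[A,s]=\{1\}$, and let $W(S)=\langle \mathbb{W}(S)\rangle$. Then: (i) $W(S)$ is a characteristic subgroup of $S$; (ii) $W(S)\in\mathbb{W}(S)$, and it is the unique largest member of $\mathbb{W}(S)$ with respect to inclusion; (iii) $\Omega(Z(S))\le W(S)$; (iv) if $W(S)\le T\le S$ then $W(S)\le W(T)$.
   Context: $\Omega(X)$ denotes the subgroup generated by elements of order $p$ in $X$; $[A,s,s]=[[A,s],s]$. *)

(* Defs.v *)
From mathcomp Require Import all_boot all_fingroup all_solvable.
Set Implicit Arguments. Unset Strict Implicit. Unset Printing Implicit Defensive.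
Local Open Scope group_scope.

Definition commE (gT : finGroupType) (A : {set gT}) (s : gT) : {set gT} :=
  <<[set [~ a, s] | a in A]>>.

Definition WWset (gT : finGroupType) (p : nat) (S : {set gT}) : {set {set gT}} :=
  [set A : {set gT} | [&& group_set A, A <| S, p.-abelem A &
     [forall s in S, (commE (commE A s) s == 1) ==> (commE A s == 1)]]].

Definition Wgrp (gT : finGroupType) (p : nat) (S : {set gT}) : {set gT} :=
  <<\bigcup_(A in WWset p S) A>>.

(* Main.v *)
Require Import Defs.
From mathcomp Require Import all_boot all_fingroup all_solvable.
Set Implicit Arguments. Unset Strict Implicit. Unset Printing Implicit Defensive.
Local Open Scope group_scope.

Lemma commuteMl (G : finGroupType) (x y z : G) :
  commute x z -> commute y z -> commute (x * y) z.
Proof. by move=> a b; apply/commute_sym/commuteM; apply/commute_sym. Qed.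

Lemma commE1P (gT : finGroupType) (X : {set gT}) (s : gT) :
  reflect (forall x, x \in X -> commute x s) (commE X s == 1).
Proof.
rewrite /commE -subG1 gen_subG; apply: (iffP subsetP) => H.
  move=> x Xx; apply/commgP; have := H _ (imset_f (fun a => [~ a, s]) Xx).
  by rewrite inE.
move=> y /imsetP[x Xx ->]; rewrite inE; exact/commgP/H.
Qed.

Definition condW (gT : finGroupType) (S A : {set gT}) :=
  forall s, s \in S -> (forall a, a \in A -> commute [~ a, s] s) ->
    forall a, a \in A -> commute a s.

Lemma WWP (gT : finGroupType) p (S A : {set gT}) :
  reflect [/\ group_set A, A <| S, p.-abelem A & condW S A] (A \in WWset p S).
Proof.
rewrite inE; apply: (iffP and4P) => [[gA nA eA /forall_inP H]|[gA nA eA H]].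
  split=> // s Ss Hs; apply/commE1P; apply: (implyP (H s Ss)).
  apply/commE1P => y /gen_prodgP[n [f Hf ->]].
  elim/big_rec: _ => [|i x _ IH]; first exact: commute_sym (commute1 _).
  apply: commuteMl => //; have /imsetP[a Aa ->] := Hf i; exact: Hs.
split=> //; apply/forall_inP => s Ss; apply/implyP => /commE1P Hc.
apply/commE1P; apply: H => // a Aa; apply: Hc; apply: mem_gen.
exact: imset_f.
Qed.

Lemma WW_join (gT : finGroupType) p (S A B : {group gT}) : prime p ->
  (A : {set gT}) \in WWset p S -> (B : {set gT}) \in WWset p S -> (A <*> B)%g \in WWset p S.
Proof.
move=> pr /WWP[_ nA eA cA] /WWP[_ nB eB cB].
have sAS := normal_sub nA; have sBS := normal_sub nB.
have aA := abelem_abelian eA; have aB := abelem_abelian eB.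
have cAB : B \subset 'C(A).
  apply/subsetP => b Bb; apply/centP => a Aa; apply: commute_sym.
  apply: (cA b (subsetP sBS b Bb)) => // a' Aa'.
  have : [~ a', b] \in B.
    rewrite commgEr groupM // memJ_norm ?groupV //.
    exact: subsetP (normal_norm nB) a' (subsetP sAS a' Aa').
  by move=> cb; apply: (centsP aB).
have eJ : A <*> B = A * B.
  by apply: norm_joinEr; apply: subset_trans sBS (normal_norm nA).
apply/WWP; split.
- exact: groupP.
- exact: normalY.
- apply/abelemP => //; split; first by rewrite abelianY aA aB cAB.
  move=> x /=; rewrite eJ => /mulsgP[a b Aa Bb ->].
  rewrite expgMn; last by apply/commute_sym; apply: (centP (subsetP cAB b Bb)).
  by rewrite (abelemP pr eA).2 // (abelemP pr eB).2 // mulg1.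
- move=> s Ss Hs x; rewrite eJ => /mulsgP[a b Aa Bb ->].
  apply: commuteMl.
    apply: (cA s Ss) => // a' Aa'; apply: Hs.
    by rewrite eJ; apply/mulsgP; exists a' 1; rewrite ?mulg1.
  apply: (cB s Ss) => // b' Bb'; apply: Hs.
  by rewrite eJ; apply/mulsgP; exists 1 b'; rewrite ?mul1g.
Qed.

Lemma WW1 (gT : finGroupType) p (S : {group gT}) : (1 : {set gT}) \in WWset p S.
Proof.
apply/WWP; split; first exact: group_set_one.
- exact: normal1.
- exact: abelem1.
- by move=> s _ _ a /set1P ->; apply: commute_sym (commute1 _).
Qed.

Lemma WW_max_ex (gT : finGroupType) p (S : {group gT}) : prime p ->
  exists M : {group gT}, (M : {set gT}) \in WWset p S /\
    forall A, A \in WWset p S -> A \subset M.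
Proof.
move=> pr.
suff H : forall s : seq {set gT}, all (mem (WWset p S)) s ->
  exists M : {group gT}, (M : {set gT}) \in WWset p S /\
    forall A, A \in s -> A \subset M.
  have [|M [MW HM]] := H (enum (WWset p S)).
    by apply/allP => x; rewrite mem_enum.
  by exists M; split=> // A AW; apply: HM; rewrite mem_enum.
elim=> [|A s IH] /=.
  by move=> _; exists 1%G; split; [exact: WW1|].
case/andP=> AW /IH[M [MW HM]].
have gA : group_set A by case/WWP: AW.
exists (M <*> Group gA)%G; split.
  exact: WW_join.
move=> B; rewrite inE => /orP[/eqP -> | Bs].
  exact: (joing_subr M (Group gA)).
exact: subset_trans (HM B Bs) (joing_subl _ _).
Qed.

Lemma Wmax (gT : finGroupType) p (S : {group gT}) : prime p ->
  Wgrp p S \in WWset p S /\ forall A, A \in WWset p S -> A \subset Wgrp p S.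
Proof.
move=> pr; have [M [MW HM]] := WW_max_ex S pr.
have -> : Wgrp p S = M.
  apply/eqP; rewrite eqEsubset; apply/andP; split.
    by rewrite gen_subG; apply/bigcupsP.
  by apply/subsetP => x Mx; apply: mem_gen; apply/bigcupP; exists (gval M).
by split.
Qed.

Lemma injm_commute (aT rT : finGroupType) (D : {group aT}) (f : {morphism D >-> rT})
  x y : 'injm f -> x \in D -> y \in D -> commute (f x) (f y) <-> commute x y.
Proof.
move=> inj Dx Dy; rewrite /commute -!morphM //; split=> [|->] //.
by move/(injmP inj); apply; rewrite groupM.
Qed.

Lemma WW_morph (gT : finGroupType) p (S A : {group gT}) (f : {morphism S >-> gT}) :
  'injm f -> f @* S = S -> (A : {set gT}) \in WWset p S -> f @* A \in WWset p S.
Proof.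
move=> inj fS /WWP[_ nA eA cA]; have sAS := normal_sub nA.
apply/WWP; split.
- exact: groupP.
- by move: (morphim_normal f nA); rewrite fS.
- exact: morphim_abelem.
move=> s; rewrite -{1}fS => /morphimP[t St _ ->] Hs x /morphimP[a Sa Aa ->].
apply: (proj2 (injm_commute inj Sa St)); apply: (cA t St) => // a' Aa'.
have Sa' := subsetP sAS a' Aa'.
have := Hs (f a') (mem_morphim f Sa' Aa').
by rewrite -morphR //; move/(proj1 (injm_commute inj (groupR Sa' St) St)).
Qed.

Theorem lemma2p12 (gT : finGroupType) (p : nat) (S : {group gT}) :
  prime p -> p.-group S ->
  [/\ Wgrp p S \char S,
      Wgrp p S \in WWset p S /\ (forall A, A \in WWset p S -> A \subset Wgrp p S),
      'Ohm_1('Z(S)) \subset Wgrp p S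
    & forall T : {group gT}, Wgrp p S \subset T -> T \subset S ->
        Wgrp p S \subset Wgrp p T].
Proof.
move=> pr pS; have [WW Wm] := Wmax S pr.
have /WWP[_ nW eW cW] := WW; have sWS := normal_sub nW.
split=> //.
- apply/charP; split=> // f inj fS.
  have fW := WW_morph inj fS WW.
  apply/eqP; rewrite eqEcard Wm //= card_injm //.
- apply: Wm; apply/WWP; split.
  + exact: groupP.
  + exact: char_normal (char_trans (Ohm_char 1 _) (center_char S)).
  + apply: Ohm1_abelem; last exact: center_abelian.
    exact: pgroupS (center_sub S) pS.
  + move=> s Ss _ a /(subsetP (Ohm_sub 1 _)) /centerP[_ Ca].
    exact: Ca.
- move=> T sWT sTS; have [_ WmT] := Wmax T pr; apply: WmT.
  apply/WWP; split=> //.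
  + exact: groupP.
  + exact: normalS nW.
  + by move=> s Ts; apply: cW; apply: (subsetP sTS).
Qed.
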